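(* Let $\mathcal{H}$ be a real Hilbert space, let $\Gamma\subseteq\mathbb{R}_{++}$ be nonempty, let $\beta\in[0,1)$ and let $(T_\gamma)_{\gamma\in\Gamma}$ be a family of $\beta$-contractions on $\mathcal{H}$ with $\operatorname{Fix}T_\gamma\neq\emptyset$ for all $\gamma\in\Gamma$. Let $(\mathcal{Q}_{\delta\leftarrow\gamma})_{\gamma,\delta\in\Gamma}$ be fixed-point relocators for $(T_\gamma)_{\gamma\in\Gamma}$ with Lipschitz constants $(\mathcal{L}_{\delta\leftarrow\gamma})_{\gamma,\delta\in\Gamma}$ in $[1,+\infty)$. Suppose that: (1) for each bounded subset $S\subseteq\bigcup_{\gamma\in\Gamma}(\operatorname{Fix}T_\gamma\times\{\gamma\})$ there exists $L>0$ with $\|\mathcal{Q}_{\delta\leftarrow\gamma}x-\mathcal{Q}_{\gamma\leftarrow\gamma}x\|\le L|\delta-\gamma|$ for all $\delta\in\Gamma$ and all $(x,\gamma)\in S$; (2) the map $\mathcal{H}\times\Gamma\to\mathcal{H}$, $(x,\gamma)\mapsto T_\gamma x$, is continuous; (3) $(\gamma_n)_{n\in\mathbb{N}}\subseteq\Gamma$ converges $R$-linearly to some $\gamma^*\in\Gamma$, and $\sum_{n\in\mathbb{N}}(\mathcal{L}_{\gamma_{n+1}\leftarrow\gamma_n}-1)<+\infty$. Given $x_0\in\mathcal{H}$, define $x_{n+1}:=\mathcal{Q}_{\gamma_{n+1}\leftarrow\gamma_n}T_{\gamma_n}x_n$ for all $n\in\mathbb{N}$. Then (i) $(\operatorname{dist}(x_n,\operatorname{Fix}T_{\gamma_n}))_{n\in\mathbb{N}}$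 converges $R$-linearly to zero, and (ii) $(x_n)_{n\in\mathbb{N}}$ and $(T_{\gamma_n}x_n)_{n\in\mathbb{N}}$ converge $R$-linearly to the same point in $\operatorname{Fix}T_{\gamma^*}$.
   Context: A $\beta$-contraction is a map $T$ with $\|Tx-Ty\|\le\beta\|x-y\|$ for all $x,y$, where $\beta\in[0,1)$. $\operatorname{Fix}T=\{x:Tx=x\}$, $\operatorname{dist}(x,C)=\inf_{y\in C}\|x-y\|$. Fixed-point relocators: given a nonempty $\Gamma\subseteq\mathbb{R}_{++}$ and operators $(T_\gamma)_{\gamma\in\Gamma}$ on $\mathcal{H}$, a family of operators $(\mathcal{Q}_{\delta\leftarrow\gamma})_{\delta,\gamma\in\Gamma}$ on $\mathcal{H}$ is called fixed-point relocators for $(T_\gamma)$ with Lipschitz constants $(\mathcal{L}_{\delta\leftarrow\gamma})$ in $[1,\infty)$ if: (a) for all $\gamma,\delta\in\Gamma$, the restriction of $\mathcal{Q}_{\delta\leftarrow\gamma}$ to $\operatorname{Fix}T_\gamma$ is a bijection from $\operatorname{Fix}T_\gamma$ onto $\operatorname{Fix}T_\delta$; (b) for all $\gamma\in\Gamma$ and $x\in\operatorname{Fix}T_\gamma$, $\delta\mapsto\mathcal{Q}_{\delta\leftarrow\gamma}x$ is continuous on $\Gamma$; (c) for all $\gamma,\delta,\epsilon\in\Gamma$ and $x\in\operatorname{Fix}T_\gamma$, $\mathcal{Q}_{\epsilon\leftarrow\delta}\mathcal{Q}_{\delta\leftarrow\gamma}x=\mathcal{Q}_{\epsilon\leftarrow\gamma}x$;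 (d) each $\mathcal{Q}_{\delta\leftarrow\gamma}$ is $\mathcal{L}_{\delta\leftarrow\gamma}$-Lipschitz. A sequence $(a_n)$ converges $R$-linearly to $a$ if there exist $C\ge0$, $r\in(0,1)$ with $\|a_n-a\|\le Cr^n$ for all $n$. *)

(* Defs.v *)
From HB Require Import structures.
From mathcomp Require Import all_boot all_order all_algebra.
From mathcomp Require Import all_classical all_reals all_analysis.
Set Implicit Arguments. Unset Strict Implicit. Unset Printing Implicit Defensive.
Import Order.TTheory GRing.Theory Num.Theory.
Import numFieldNormedType.Exports.
Local Open Scope classical_set_scope.
Local Open Scope ring_scope.

(* ip is an inner product on V inducing the norm of V.  A real Hilbert space
   is a complete normed space V (completeNormedModType R) equipped with such ip. *)
Definition is_inner_product_of_norm (R : realType) (V : normedModType R)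
  (ip : V -> V -> R) : Prop :=
  [/\ (forall x y, ip x y = ip y x),
      (forall (a : R) (x y z : V), ip (a *: x + y) z = a * ip x z + ip y z)
    & (forall x, ip x x = `|x| ^+ 2)].

Definition FixSet (T : Type) (f : T -> T) : set T := [set x | f x = x].

Definition dist_set (R : realType) (V : normedModType R) (x : V) (C : set V) : R :=
  inf [set `|x - y| | y in C].

Definition beta_contraction (R : realType) (V : normedModType R) (beta : R)
  (f : V -> V) : Prop :=
  forall x y, `|f x - f y| <= beta * `|x - y|.

Definition lipschitz_with (R : realType) (V : normedModType R) (L : R)
  (f : V -> V) : Prop :=
  forall x y, `|f x - f y| <= L * `|x - y|.

Definition Rlinear_cvg (R : realType) (V : normedModType R) (a : nat -> V)
  (l : V) : Prop :=
  exists (C r : R), [/\ 0 <= C, 0 < r, r < 1 &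
    forall n, `|a n - l| <= C * r ^+ n].

(* Fixed-point relocators (a)-(d) for the family T, with Lipschitz constants L;
   Q d g stands for Q_{d <- g}, L d g for L_{d <- g}. *)
Definition fixed_point_relocators (R : realType) (V : normedModType R)
  (Gam : set R) (T : R -> V -> V) (Q : R -> R -> V -> V) (L : R -> R -> R)
  : Prop :=
  [/\ (forall g d, Gam g -> Gam d -> set_bij (FixSet (T g)) (FixSet (T d)) (Q d g)),
      (forall g x, Gam g -> FixSet (T g) x ->
          {within Gam, continuous (fun d => Q d g x)}),
      (forall g d e x, Gam g -> Gam d -> Gam e -> FixSet (T g) x ->
          Q e d (Q d g x) = Q e g x)
    & (forall g d, Gam g -> Gam d -> 1 <= L d g /\ lipschitz_with (L d g) (Q d g))].

(* Main.v *)
Require Import Defs.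
From HB Require Import structures.
From mathcomp Require Import all_boot all_order all_algebra.
From mathcomp Require Import all_classical all_reals all_analysis.
From mathcomp Require Import ring lra.
Import Order.TTheory GRing.Theory Num.Theory.
Import numFieldNormedType.Exports.
Local Open Scope classical_set_scope.
Local Open Scope ring_scope.


Lemma powle (R : realType) (a b : R) n : 0 <= a -> a <= b -> a ^+ n <= b ^+ n.
Proof.
move=> a0 ab; apply: lerXn2r => //; rewrite nnegrE //; exact: le_trans ab.
Qed.

Theorem corollary3p8 (R : realType) (V : completeNormedModType R)
  (ip : V -> V -> R) (Gam : set R) (beta : R)
  (T : R -> V -> V) (Q : R -> R -> V -> V) (L : R -> R -> R)
  (gam : nat -> R) (gstar : R) (x0 : V) (x : nat -> V) :
  is_inner_product_of_norm ip ->
  Gam !=set0 ->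
  (forall g, Gam g -> 0 < g) ->
  0 <= beta -> beta < 1 ->
  (forall g, Gam g -> beta_contraction beta (T g)) ->
  (forall g, Gam g -> FixSet (T g) !=set0) ->
  fixed_point_relocators Gam T Q L ->
  (* (1) *)
  (forall S : set (V * R),
     S `<=` [set p | Gam p.2 /\ FixSet (T p.2) p.1] ->
     (exists M : R, forall p, S p -> `|p.1| <= M /\ `|p.2| <= M) ->
     exists L0 : R, 0 < L0 /\
       forall d p, Gam d -> S p ->
         `|Q d p.2 p.1 - Q p.2 p.2 p.1| <= L0 * `|d - p.2|) ->
  (* (2) *)
  {within [set p : V * R | Gam p.2], continuous (fun p : V * R => T p.2 p.1)} ->
  (* (3) *)
  (forall n, Gam (gam n)) -> Gam gstar -> Rlinear_cvg gam gstar ->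
  (\sum_(0 <= n <oo) ((L (gam n.+1) (gam n) - 1)%:E) < +oo)%E ->
  (* iteration *)
  x 0%N = x0 ->
  (forall n, x n.+1 = Q (gam n.+1) (gam n) (T (gam n) (x n))) ->
  Rlinear_cvg (fun n => dist_set (x n) (FixSet (T (gam n)))) 0
  /\ exists z, FixSet (T gstar) z /\ Rlinear_cvg x z
               /\ Rlinear_cvg (fun n => T (gam n) (x n)) z.
Proof.
move=> _ _ _ b0 b1 Hcon Hne [Ha Hb Hc Hd] H1 _ Hgn Gs [C [r [C0 r0 r1 HC]]] Hsum _ Hx.
have [q Fq] := Hne gstar Gs.
set p := fun n => Q (gam n) gstar q.
have Fp : forall n, T (gam n) (p n) = p n.
  by move=> n; have [f _ _] := Ha gstar (gam n) Gs (Hgn n); have := f q Fq.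
have Qss : Q gstar gstar q = q.
  have [f i _] := Ha gstar gstar Gs Gs.
  apply: i; [exact/mem_set/(f q Fq)|exact/mem_set|exact: Hc].
have pS : forall n, p n.+1 = Q (gam n.+1) (gam n) (p n).
  by move=> n; rewrite /p Hc.
set a := fun k => L (gam k.+1) (gam k) - 1.
have a0 : forall k, 0 <= a k.
  by move=> k; rewrite /a subr_ge0; have [] := Hd _ _ (Hgn k) (Hgn k.+1).
set Ss := fun n => \sum_(0 <= k < n) a k.
have [Sf HSf] : exists Sf, forall n, Ss n <= Sf.
  set sS := (\sum_(0 <= n <oo) _)%E in Hsum.
  have Hp : forall n, ((Ss n)%:E <= sS)%E.
    move=> n; rewrite /Ss -sumEFin.
    by apply: nneseries_lim_ge => k _ _; rewrite lee_fin; exact: a0.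
  move: sS Hsum Hp; case => [s| |] Hs Hp.
  - by exists s => n; rewrite -lee_fin.
  - by rewrite ltxx in Hs.
  - by have := Hp 0%N.
set E := expR Sf.
set B0 := `|x 0%N - p 0%N|.
have key : forall n, `|x n - p n| <= expR (Ss n) * beta ^+ n * B0.
  elim=> [|n IH]; first by rewrite /Ss big_geq // expR0 expr0 !mul1r.
  have [L1 Lip] := Hd _ _ (Hgn n) (Hgn n.+1).
  rewrite Hx pS.
  apply: (le_trans (Lip _ _)).
  have h1 : `|T (gam n) (x n) - p n| <= beta * `|x n - p n|.
    by have := Hcon _ (Hgn n) (x n) (p n); rewrite Fp.
  have h2 : L (gam n.+1) (gam n) <= expR (a n).
    by have := expR_ge1Dx (a n); rewrite /a addrC subrK.
  rewrite /Ss big_nat_recr //= expRD -/(Ss n) exprS.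
  have e0 := expR_ge0 (Ss n).
  have e1 := expR_ge0 (a n).
  have B00 : 0 <= B0 by exact: normr_ge0.
  have bn0 : 0 <= beta ^+ n by exact: exprn_ge0.
  have Lp : 0 <= L (gam n.+1) (gam n) by apply: le_trans L1.
  apply: (le_trans (ler_pM Lp (normr_ge0 _) (lexx _) h1)).
  have -> : expR (Ss n) * expR (a n) * (beta * beta ^+ n) * B0
     = expR (a n) * (beta * (expR (Ss n) * beta ^+ n * B0)) by ring.
  apply: ler_pM => //; first by apply: mulr_ge0.
  apply: ler_pM => //.
set s := Num.max beta r.
have s0 : 0 < s by rewrite lt_max r0 orbT.
have s1 : s < 1 by rewrite gt_max b1 r1.
have bs : beta <= s by rewrite le_max lexx.
have rs : r <= s by rewrite le_max lexx orbT.
have B00 : 0 <= B0 by exact: normr_ge0.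
have E0 : 0 <= E by exact: expR_ge0.
have key2 : forall n, `|x n - p n| <= E * B0 * s ^+ n.
  move=> n; apply: (le_trans (key n)).
  rewrite [E * B0 * _]mulrAC.
  apply: ler_pM => //.
  - by apply: mulr_ge0; [exact: expR_ge0|exact: exprn_ge0].
  - by apply: ler_pM; rewrite ?expR_ge0 ?exprn_ge0 ?ler_expR ?HSf //; exact: powle.
have [L0 [L00 HL0]] : exists L0 : R, 0 < L0 /\
    (forall (d : R) (pp : V * R),
     Gam d -> [set (q, gstar)] pp -> `|Q d pp.2 pp.1 - Q pp.2 pp.2 pp.1| <= L0 * `|d - pp.2|).
  apply: H1; first by move=> pp ->.
  exists (Num.max `|q| `|gstar|) => pp -> /=.
  by rewrite !le_max !lexx orbT.
have hp : forall n, `|p n - q| <= L0 * C * s ^+ n.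
  move=> n; have := HL0 (gam n) (q, gstar) (Hgn n) erefl; rewrite /= Qss => h.
  apply: (le_trans h); rewrite -mulrA.
  apply: (ler_pM (ltW L00) (normr_ge0 _) (lexx _)).
  apply: (le_trans (HC n)); apply: (ler_pM C0 (exprn_ge0 _ (ltW r0)) (lexx _)).
  by apply: powle => //; exact: ltW.
have tri : forall k (u : V), `|u - q| <= `|u - p k| + `|p k - q|.
  move=> k u; have -> : u - q = (u - p k) + (p k - q) by rewrite addrA subrK.
  exact: ler_normD.
have K0 : 0 <= E * B0 + L0 * C.
  by apply: addr_ge0; apply: mulr_ge0 => //; exact: ltW.
split.
  exists (E * B0), s; split => //; first exact: mulr_ge0.
  move=> n; rewrite subr0.
  set Es := [set `|x n - y| | y in FixSet (T (gam n))].
  have lb0 : lbound Es 0 by move=> _ [y _ <-]; exact: normr_ge0.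
  have EsP : Es `|x n - p n| by exists (p n) => //; exact: Fp.
  have i0 : 0 <= inf Es by apply: lb_le_inf => //; exists `|x n - p n|.
  rewrite /dist_set -/Es ger0_norm //.
  apply: le_trans (key2 n).
  by apply: (ge_inf _ EsP); exists 0.
exists q; split => //; split.
  exists (E * B0 + L0 * C), s; split => // n.
  apply: (le_trans (tri n _)); rewrite mulrDl; exact: lerD.
exists (E * B0 + L0 * C), s; split => // n.
apply: (le_trans (tri n _)); rewrite mulrDl; apply: lerD => //.
apply: le_trans (key2 n).
have := Hcon _ (Hgn n) (x n) (p n); rewrite Fp => h; apply: (le_trans h).
by rewrite ler_piMl // ltW.
Qed.
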